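(* Let $K$ be a compact convex set with nonempty interior in a two-dimensional real vector space, centrally symmetric with respect to the origin. Then $K$ is an ellipse (i.e. a region bounded by an ellipse centered at the origin) if and only if for all $x,y\in\partial K$ with $x\neq\pm y$, $K$ is invariant under the linear map $T$ defined by $T(x+y)=-x-y$ and $T(y-x)=y-x$. *)

(* Defs.v *)
From Stdlib Require Import Reals.
Open Scope R_scope.

Definition pt := (R * R)%type.

Definition padd (p q : pt) : pt := (fst p + fst q, snd p + snd q).
Definition psub (p q : pt) : pt := (fst p - fst q, snd p - snd q).
Definition popp (p : pt) : pt := (- fst p, - snd p).
Definition pscal (t : R) (p : pt) : pt := (t * fst p, t * snd p).

Definition pnorm (p : pt) : R := sqrt (fst p ^ 2 + snd p ^ 2).
Definition pdist (p q : pt) : R := pnorm (psub p q).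

Definition interior_pt (K : pt -> Prop) (p : pt) : Prop :=
  exists r, 0 < r /\ forall q, pdist q p < r -> K q.
Definition closure_pt (K : pt -> Prop) (p : pt) : Prop :=
  forall r, 0 < r -> exists q, K q /\ pdist q p < r.
Definition boundary_pt (K : pt -> Prop) (p : pt) : Prop :=
  closure_pt K p /\ ~ interior_pt K p.

Definition is_closed (K : pt -> Prop) : Prop := forall p, closure_pt K p -> K p.
Definition is_bounded (K : pt -> Prop) : Prop :=
  exists M, forall p, K p -> pnorm p <= M.
(* Heine-Borel in R^2: compact = closed and bounded *)
Definition is_compact (K : pt -> Prop) : Prop := is_closed K /\ is_bounded K.

Definition is_convex (K : pt -> Prop) : Prop :=
  forall p q t, K p -> K q -> 0 <= t <= 1 ->
    K (padd (pscal (1 - t) p) (pscal t q)).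

Definition centrally_symmetric (K : pt -> Prop) : Prop :=
  forall p, K p -> K (popp p).

Definition nonempty_interior (K : pt -> Prop) : Prop :=
  exists p, interior_pt K p.

Definition lin_app (a b c d : R) (p : pt) : pt :=
  (a * fst p + b * snd p, c * fst p + d * snd p).

(* K is the (closed) region bounded by an ellipse centred at the origin:
   K = { v | Q(v) <= 1 } for a positive definite quadratic form Q. *)
Definition is_ellipse (K : pt -> Prop) : Prop :=
  exists a b c : R, 0 < a /\ 0 < a * c - b * b /\
    forall p, K p <-> a * fst p ^ 2 + 2 * b * fst p * snd p + c * snd p ^ 2 <= 1.

(* Main.v *)
Require Import Defs.
From Stdlib Require Import Reals Lra Psatz.
From Stdlib Require Import IndefiniteDescription.
Open Scope R_scope.

Ltac pteq := repeat match goal with p : pt |- _ => destruct p end;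
  unfold padd, psub, popp, pscal, lin_app; simpl; f_equal; field; try lra.

Lemma pnorm_pair x y : pnorm (x, y) = sqrt (x*x + y*y).
Proof. unfold pnorm; simpl; f_equal; ring. Qed.

Lemma pnorm_nonneg p : 0 <= pnorm p.
Proof. unfold pnorm; apply sqrt_pos. Qed.

Lemma sqrt_lt_iff X r : 0 <= X -> 0 < r -> (sqrt X < r <-> X < r*r).
Proof.
  intros HX Hr; split; intro H.
  - rewrite <- (sqrt_sqrt X HX). assert (0 <= sqrt X) by apply sqrt_pos. nra.
  - rewrite <- (sqrt_square r) by lra. apply sqrt_lt_1; nra.
Qed.

Lemma sqrt_le_iff X r : 0 <= X -> 0 <= r -> (sqrt X <= r <-> X <= r*r).
Proof.
  intros HX Hr; split; intro H.
  - rewrite <- (sqrt_sqrt X HX). assert (0 <= sqrt X) by apply sqrt_pos. nra.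
  - rewrite <- (sqrt_square r) by lra. apply sqrt_le_1; nra.
Qed.

Lemma pnorm_lt x y r : 0 < r -> (pnorm (x,y) < r <-> x*x+y*y < r*r).
Proof. intro; rewrite pnorm_pair; apply sqrt_lt_iff; nra. Qed.

Lemma pnorm_le x y r : 0 <= r -> (pnorm (x,y) <= r <-> x*x+y*y <= r*r).
Proof. intro; rewrite pnorm_pair; apply sqrt_le_iff; nra. Qed.

Lemma pnorm_sq x y : pnorm (x,y) * pnorm (x,y) = x*x+y*y.
Proof. rewrite pnorm_pair; apply sqrt_sqrt; nra. Qed.

Lemma pnorm_scal t w : pnorm (pscal t w) = Rabs t * pnorm w.
Proof.
  destruct w as [x y]; unfold pscal; simpl; rewrite !pnorm_pair.
  replace (t*x*(t*x) + t*y*(t*y)) with ((t*t) * (x*x+y*y)) by ring.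
  rewrite sqrt_mult_alt by nra. f_equal.
  rewrite <- sqrt_Rsqr_abs. reflexivity.
Qed.

Lemma pnorm_pos x y : (x,y) <> (0,0) -> 0 < pnorm (x,y).
Proof.
  intro H. rewrite pnorm_pair. apply sqrt_lt_R0.
  destruct (Req_dec x 0); destruct (Req_dec y 0); subst; try nra.
  exfalso; apply H; reflexivity.
Qed.

Lemma pnorm_bound x y : pnorm (x,y) <= Rabs x + Rabs y.
Proof.
  apply pnorm_le. apply Rplus_le_le_0_compat; apply Rabs_pos.
  pose proof (Rabs_pos x); pose proof (Rabs_pos y).
  assert (Rabs x * Rabs x = x*x) by (rewrite <- Rabs_mult; apply Rabs_right; nra).
  assert (Rabs y * Rabs y = y*y) by (rewrite <- Rabs_mult; apply Rabs_right; nra).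
  nra.
Qed.

Lemma abs_le_pnorm x y : x*x <= pnorm (x,y) * pnorm (x,y) /\ y*y <= pnorm (x,y) * pnorm (x,y).
Proof. rewrite pnorm_sq; split; nra. Qed.



Lemma zero_interior K : is_convex K -> nonempty_interior K -> centrally_symmetric K ->
  exists r0, 0 < r0 /\ forall q, pnorm q < r0 -> K q.
Proof.
  intros Hc [p [r [Hr Hb]]] Hs. exists r; split; auto. intros q Hq.
  assert (K1 : K (padd p q)).
  { apply Hb. unfold pdist. replace (psub (padd p q) p) with q by pteq. auto. }
  assert (K2 : K (popp (psub p q))).
  { apply Hs, Hb. unfold pdist. destruct p as [p1 p2]; destruct q as [q1 q2].
    unfold psub; simpl. rewrite pnorm_pair. rewrite pnorm_pair in Hq.
    replace (p1 - q1 - p1) with (- q1) by ring. replace (p2 - q2 - p2) with (- q2) by ring.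
    replace (- q1 * - q1 + - q2 * - q2) with (q1*q1+q2*q2) by ring. auto. }
  pose proof (Hc _ _ (/2) K1 K2 ltac:(lra)) as H.
  replace q with (padd (pscal (1 - / 2) (padd p q)) (pscal (/ 2) (popp (psub p q)))); auto.
  pteq.
Qed.

Lemma K0 K : is_convex K -> nonempty_interior K -> centrally_symmetric K -> K (0,0).
Proof.
  intros Hc Hi Hs. destruct (zero_interior K Hc Hi Hs) as [r [Hr H]]. apply H.
  rewrite pnorm_pair. replace (0*0+0*0) with 0 by ring. rewrite sqrt_0; auto.
Qed.

Lemma conv0 K w l : is_convex K -> nonempty_interior K -> centrally_symmetric K ->
  K w -> 0 <= l <= 1 -> K (pscal l w).
Proof.
  intros Hc Hi Hs Kw Hl. pose proof (Hc _ _ l (K0 K Hc Hi Hs) Kw Hl) as H.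
  replace (pscal l w) with (padd (pscal (1 - l) (0, 0)) (pscal l w)); auto. pteq.
Qed.

Lemma interior_scale K y l : is_convex K -> nonempty_interior K -> centrally_symmetric K ->
  K y -> 0 <= l < 1 -> interior_pt K (pscal l y).
Proof.
  intros Hc Hi Hs Ky Hl. destruct (zero_interior K Hc Hi Hs) as [r [Hr H]].
  exists ((1 - l) * r). split; [nra|]. intros q Hq.
  set (z := pscal (/ (1 - l)) (psub q (pscal l y))).
  assert (Kz : K z).
  { apply H. unfold z. rewrite pnorm_scal. unfold pdist in Hq.
    rewrite Rabs_right by (apply Rle_ge; left; apply Rinv_0_lt_compat; lra).
    apply (Rmult_lt_reg_l (1 - l)); [lra|]. rewrite <- Rmult_assoc, Rinv_r by lra. lra. }
  pose proof (Hc _ _ l Kz Ky ltac:(lra)) as HH.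
  replace q with (padd (pscal (1 - l) z) (pscal l y)); auto. unfold z. pteq.
Qed.

Definition Bd (K : pt -> Prop) x := K x /\ forall l, 1 < l -> ~ K (pscal l x).

Lemma bd_of_boundary K x : is_closed K -> is_convex K -> nonempty_interior K ->
  centrally_symmetric K -> boundary_pt K x -> Bd K x.
Proof.
  intros Hcl Hc Hi Hs [Hx Hni]. assert (Kx : K x) by (apply Hcl; auto).
  split; auto. intros l Hl Kl. apply Hni.
  replace x with (pscal (/ l) (pscal l x)).
  - apply interior_scale; auto. split. left; apply Rinv_0_lt_compat; lra.
    rewrite <- Rinv_1; apply Rinv_1_lt_contravar; lra.
  - pteq.
Qed.



Lemma Bd_nonzero K x : Bd K x -> x <> (0,0).
Proof.
  intros [Kx H] E; subst. apply (H 2); [lra|]. replace (pscal 2 (0,0)) with (0,0) by pteq. auto.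
Qed.

Lemma Bd_sym K x : centrally_symmetric K -> Bd K x -> Bd K (popp x).
Proof.
  intros Hs [Kx H]; split; auto. intros l Hl Kl. apply (H l Hl).
  replace (pscal l x) with (popp (pscal l (popp x))) by pteq. auto.
Qed.

Lemma Bd_ray K x t : is_convex K -> nonempty_interior K -> centrally_symmetric K ->
  Bd K x -> Bd K (pscal t x) -> 0 < t -> t = 1.
Proof.
  intros Hc Hi Hs [Kx Hx] [Kt Ht] Htp.
  destruct (Rtotal_order t 1) as [Hlt|[Heq|Hgt]]; auto.
  - exfalso. apply (Ht (/ t)).
    + rewrite <- Rinv_1. apply Rinv_lt_contravar; lra.
    + replace (pscal (/ t) (pscal t x)) with x by pteq. auto.
  - exfalso. apply (Hx t Hgt Kt).
Qed.

Lemma exists_bd K w : is_closed K -> is_bounded K -> is_convex K -> nonempty_interior K ->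
  centrally_symmetric K -> w <> (0,0) -> exists t, 0 < t /\ boundary_pt K (pscal t w).
Proof.
  intros Hcl [M HM] Hc Hi Hs Hw.
  destruct (zero_interior K Hc Hi Hs) as [r0 [Hr0 H0]].
  assert (Hnw : 0 < pnorm w) by (destruct w; apply pnorm_pos; auto).
  set (E := fun t => 0 <= t /\ K (pscal t w)).
  assert (HEb : bound E).
  { exists (M / pnorm w). intros t [Ht Kt]. apply HM in Kt. rewrite pnorm_scal in Kt.
    rewrite Rabs_right in Kt by lra. apply (Rmult_le_reg_r (pnorm w)); auto.
    unfold Rdiv; rewrite Rmult_assoc, Rinv_l by lra. lra. }
  assert (HE0 : E (r0 / (2 * pnorm w))).
  { split. apply Rlt_le, Rdiv_lt_0_compat; lra.
    apply H0. rewrite pnorm_scal. rewrite Rabs_right by (apply Rle_ge, Rlt_le, Rdiv_lt_0_compat; lra).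
    field_simplify; lra. }
  destruct (completeness E HEb (ex_intro _ _ HE0)) as [ts [Hub Hlub]].
  assert (Hts : r0 / (2 * pnorm w) <= ts) by (apply Hub; auto).
  assert (Hts0 : 0 < ts) by (pose proof (Rdiv_lt_0_compat r0 (2 * pnorm w) Hr0 ltac:(lra)); lra).
  assert (Kts : K (pscal ts w)).
  { apply Hcl. intros e He.
    destruct (Classical_Prop.classic (exists t, E t /\ ts - e / pnorm w < t)) as [[t [[Ht Kt] Hlt]]|Hn].
    - exists (pscal t w). split; auto. unfold pdist.
      replace (psub (pscal t w) (pscal ts w)) with (pscal (t - ts) w) by pteq.
      rewrite pnorm_scal. assert (t <= ts) by (apply Hub; split; auto).
      rewrite Rabs_left1 by lra. 
      assert (e / pnorm w * pnorm w = e) by (field; lra). nra.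
    - exfalso. assert (ts <= ts - e / pnorm w).
      { apply Hlub. intros t Et. destruct (Rle_dec t (ts - e / pnorm w)); auto.
        exfalso; apply Hn; exists t; split; auto; lra. }
      assert (0 < e / pnorm w) by (apply Rdiv_lt_0_compat; lra). lra. }
  exists ts; split; auto. split.
  - intros e He. exists (pscal ts w); split; auto. unfold pdist.
    replace (psub (pscal ts w) (pscal ts w)) with (pscal 0 w) by pteq.
    rewrite pnorm_scal, Rabs_R0; lra.
  - intros [rho [Hrho Hb]].
    assert (Kb : K (pscal (ts + rho / (2 * pnorm w)) w)).
    { apply Hb. unfold pdist.
      replace (psub (pscal (ts + rho / (2 * pnorm w)) w) (pscal ts w))
        with (pscal (rho / (2 * pnorm w)) w) by pteq.
      rewrite pnorm_scal. rewrite Rabs_right by (apply Rle_ge, Rlt_le, Rdiv_lt_0_compat; lra).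
      field_simplify; lra. }
    assert (ts + rho / (2 * pnorm w) <= ts).
    { apply Hub. split; auto. pose proof (Rdiv_lt_0_compat rho (2 * pnorm w) Hrho ltac:(lra)). lra. }
    pose proof (Rdiv_lt_0_compat rho (2 * pnorm w) Hrho ltac:(lra)). lra.
Qed.



Definition Qe (A B C : R) (p : pt) := A * fst p ^ 2 + 2 * B * fst p * snd p + C * snd p ^ 2.

Lemma Qe_nonneg A B C p : 0 < A -> 0 < A*C - B*B -> 0 <= Qe A B C p.
Proof.
  intros. destruct p as [x y]; unfold Qe; cbn [fst snd].
  assert (A * (A * x^2 + 2*B*x*y + C*y^2) = (A*x+B*y)^2 + (A*C-B*B)*y^2) by ring.
  assert (0 <= (A*x+B*y)^2) by (apply pow2_ge_0). assert (0 <= (A*C-B*B)*y^2) by (apply Rmult_le_pos; [lra|apply pow2_ge_0]).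
  apply (Rmult_le_reg_l A); lra.
Qed.

Lemma Qe_scal A B C l p : Qe A B C (pscal l p) = l*l * Qe A B C p.
Proof. destruct p; unfold Qe, pscal; simpl; ring. Qed.

Lemma forward K (Hcl : is_closed K) (Hc : is_convex K) (Hi : nonempty_interior K)
  (Hs : centrally_symmetric K) A B C (HA : 0 < A) (HD : 0 < A*C - B*B)
  (HK : forall p, K p <-> Qe A B C p <= 1) :
  forall x y : pt, boundary_pt K x -> boundary_pt K y ->
     x <> y -> x <> popp y ->
     forall a b c d : R,
       lin_app a b c d (padd x y) = popp (padd x y) ->
       lin_app a b c d (psub y x) = psub y x ->
       forall p, K p -> K (lin_app a b c d p).
Proof.
  assert (Q1 : forall x, boundary_pt K x -> Qe A B C x = 1).
  { intros x Hx. destruct (bd_of_boundary K x Hcl Hc Hi Hs Hx) as [Kx Hl].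
    apply HK in Kx. destruct (Rle_lt_or_eq_dec _ _ Kx) as [Hlt|]; auto. exfalso.
    pose proof (Qe_nonneg A B C x HA HD).
    apply (Hl (2 / (1 + Qe A B C x))).
    - apply (Rmult_lt_reg_r (1 + Qe A B C x)); [lra|]. field_simplify; lra.
    - apply HK. rewrite Qe_scal. set (q := Qe A B C x) in *.
      replace (2 / (1 + q) * (2 / (1 + q)) * q) with (4*q / ((1+q)*(1+q))) by (field; lra).
      apply (Rmult_le_reg_r ((1+q)*(1+q))); [nra|]. field_simplify; nra. }
  intros x y Hx Hy Hxy Hxy' a b c d E1 E2 p Kp.
  pose proof (Q1 x Hx) as Qx. pose proof (Q1 y Hy) as Qy.
  destruct x as [x1 x2], y as [y1 y2], p as [p1 p2].
  unfold Qe in Qx, Qy; simpl in Qx, Qy.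
  unfold lin_app, padd, psub, popp in E1, E2; simpl in E1, E2.
  injection E1 as E11 E12. injection E2 as E21 E22.
  set (u1 := x1 + y1) in *. set (u2 := x2 + y2) in *.
  set (v1 := y1 - x1) in *. set (v2 := y2 - x2) in *.
  set (D := u1 * v2 - u2 * v1).
  assert (HDn : D <> 0).
  { intro HD0. assert (Hdet : x1*y2 - x2*y1 = 0) by (unfold D, u1, u2, v1, v2 in HD0; nra).
    assert (Hn : 0 < x1*x1 + x2*x2).
    { destruct (Req_dec x1 0); destruct (Req_dec x2 0); nra. }
    set (t := (x1*y1 + x2*y2) / (x1*x1+x2*x2)).
    assert (Ey1 : y1 = t * x1).
    { assert (y1*(x1*x1+x2*x2) = (x1*y1+x2*y2)*x1).
      { apply Rminus_diag_uniq; replace (y1*(x1*x1+x2*x2) - (x1*y1+x2*y2)*x1) with (-x2*(x1*y2-x2*y1)) by ring; rewrite Hdet; ring. }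
      unfold t. field_simplify_eq; lra. }
    assert (Ey2 : y2 = t * x2).
    { assert (y2*(x1*x1+x2*x2) = (x1*y1+x2*y2)*x2).
      { apply Rminus_diag_uniq; replace (y2*(x1*x1+x2*x2) - (x1*y1+x2*y2)*x2) with (x1*(x1*y2-x2*y1)) by ring; rewrite Hdet; ring. }
      unfold t. field_simplify_eq; lra. }
    assert (Ht : t * t = 1).
    { rewrite Ey1, Ey2 in Qy. 
      replace (A * (t * x1) ^ 2 + 2 * B * (t * x1) * (t * x2) + C * (t * x2) ^ 2)
        with (t*t*(A * x1 ^ 2 + 2 * B * x1 * x2 + C * x2 ^ 2)) in Qy by ring. nra. }
    assert (t = 1 \/ t = -1) as [->| ->] by nra.
    - apply Hxy. rewrite Ey1, Ey2. f_equal; ring.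
    - apply Hxy'. rewrite Ey1, Ey2. unfold popp; simpl; f_equal; ring. }
  set (al := p1 * v2 - p2 * v1). set (be := u1 * p2 - u2 * p1).
  assert (F1 : D * (a*p1 + b*p2) = - al * u1 + be * v1).
  { transitivity (al*(a*u1+b*u2) + be*(a*v1+b*v2)).
    unfold al, be, D; ring. rewrite E11, E21; ring. }
  assert (F2 : D * (c*p1 + d*p2) = - al * u2 + be * v2).
  { transitivity (al*(c*u1+d*u2) + be*(c*v1+d*v2)).
    unfold al, be, D; ring. rewrite E12, E22; ring. }
  apply HK. apply HK in Kp. unfold Qe, lin_app in Kp |- *; cbn [fst snd] in Kp |- *.
  set (X := a*p1+b*p2) in *. set (Y := c*p1+d*p2) in *.
  assert (HB : A*u1*v1 + B*(u1*v2+u2*v1) + C*u2*v2 = 0).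
  { unfold u1, u2, v1, v2. nra. }
  assert (Eq : D*D*(A * X ^ 2 + 2 * B * X * Y + C * Y ^ 2) = D*D*(A * p1 ^ 2 + 2 * B * p1 * p2 + C * p2 ^ 2)).
  { transitivity (A * (D*X) ^ 2 + 2 * B * (D*X) * (D*Y) + C * (D*Y) ^ 2). ring.
    rewrite F1, F2.
    transitivity (A * (al*u1+be*v1) ^ 2 + 2 * B * (al*u1+be*v1) * (al*u2+be*v2) + C * (al*u2+be*v2) ^ 2
       - 4*al*be*(A*u1*v1 + B*(u1*v2+u2*v1) + C*u2*v2)). ring.
    rewrite HB. unfold al, be, D. ring. }
  assert (0 < D*D) by (apply Rsqr_pos_lt; auto).
  apply (Rmult_le_reg_l (D*D)); auto. rewrite Eq. nra.
Qed.



Definition feas (K : pt -> Prop) p q r := 0 < p /\ 0 < p*r - q*q /\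
  forall v1 v2, v1*v1+v2*v2 <= 1 -> K (p*v1+q*v2, q*v1+r*v2).

Lemma feas_bound K M p q r : (forall z, K z -> pnorm z <= M) -> feas K p q r ->
  p*p+q*q <= M*M /\ q*q+r*r <= M*M /\ 0 <= M.
Proof.
  intros HM [Hp [Hd HK]].
  pose proof (HM _ (HK 1 0 ltac:(lra))) as H1.
  pose proof (HM _ (HK 0 1 ltac:(lra))) as H2.
  replace (p*1+q*0, q*1+r*0) with (p,q) in H1 by (f_equal; ring).
  replace (p*0+q*1, q*0+r*1) with (q,r) in H2 by (f_equal; ring).
  pose proof (pnorm_nonneg (p,q)). 
  rewrite <- pnorm_sq, <- (pnorm_sq q r). pose proof (pnorm_nonneg (q,r)).
  repeat split; nra.
Qed.

Lemma mixed_nonneg p1 q1 r1 p2 q2 r2 : 0 < p1 -> 0 < p1*r1-q1*q1 -> 0 < p2 -> 0 < p2*r2 - q2*q2 ->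
  0 <= p1*r2 + p2*r1 - 2*q1*q2.
Proof.
  intros. assert (0 < r1) by nra. assert (0 < r2) by nra.
  assert (H5 : 0 < p1*r2+p2*r1) by nra.
  assert (H6 : 4*(q1*q1)*(q2*q2) <= 4*(p1*r1)*(p2*r2)).
  { assert (0 <= q1*q1) by nra. assert (0 <= q2*q2) by nra.
    apply Rmult_le_compat; nra. }
  assert (H7 : (2*q1*q2)*(2*q1*q2) <= (p1*r2+p2*r1)*(p1*r2+p2*r1)).
  { assert (0 <= (p1*r2-p2*r1)*(p1*r2-p2*r1)) by apply Rle_0_sqr.
    assert (E1 : (p1*r2+p2*r1)*(p1*r2+p2*r1) = (p1*r2-p2*r1)*(p1*r2-p2*r1) + 4*(p1*r1)*(p2*r2)) by ring.
    assert (E2 : (2*q1*q2)*(2*q1*q2) = 4*(q1*q1)*(q2*q2)) by ring. lra. }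
  destruct (Rle_dec (2*q1*q2) 0). nra.
  nra.
Qed.

Lemma feas_mid K p1 q1 r1 p2 q2 r2 : is_convex K -> feas K p1 q1 r1 -> feas K p2 q2 r2 ->
  feas K ((p1+p2)/2) ((q1+q2)/2) ((r1+r2)/2).
Proof.
  intros Hc [Hp1 [Hd1 HK1]] [Hp2 [Hd2 HK2]].
  pose proof (mixed_nonneg _ _ _ _ _ _ Hp1 Hd1 Hp2 Hd2).
  split; [lra|split; [nra|]].
  intros v1 v2 Hv. pose proof (Hc _ _ (/2) (HK1 v1 v2 Hv) (HK2 v1 v2 Hv) ltac:(lra)) as HH.
  match type of HH with K ?z => replace (_, _) with z; auto end. pteq.
Qed.

Lemma key_e1 a b c al be ga : 0 < a -> 0 < a*c - b*b ->
  (a*c-b*b)^2 * al^2 <= a^2 * ((a*ga + c*al - 2*b*be)^2 - 2*(a*c-b*b)*(al*ga-be*be)).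
Proof.
  intros Ha Hd.
  assert (E : a^2 * ((a*ga + c*al - 2*b*be)^2 - 2*(a*c-b*b)*(al*ga-be*be)) - (a*c-b*b)^2 * al^2
    = 2*(a*c-b*b)*(a*be-b*al)^2 + (b*b*al - 2*a*b*be + a*a*ga)^2) by ring.
  assert (0 <= 2*(a*c-b*b)*(a*be-b*al)^2) by (apply Rmult_le_pos; [lra|apply pow2_ge_0]).
  assert (0 <= (b*b*al - 2*a*b*be + a*a*ga)^2) by apply pow2_ge_0.
  lra.
Qed.


Lemma sq_le_of_abs x M : 0 <= M -> x*x <= M*M -> -M <= x <= M.
Proof. intros. split; nra. Qed.

Lemma KI K M s p1 q1 r1 p2 q2 r2 eps :
  is_convex K -> (forall z, K z -> pnorm z <= M) ->
  (forall p q r, feas K p q r -> p*r - q*q <= s) ->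
  feas K p1 q1 r1 -> feas K p2 q2 r2 ->
  s - eps <= p1*r1 - q1*q1 -> s - eps <= p2*r2-q2*q2 -> 0 <= eps -> eps <= s/2 ->
  s*s*((p1-p2)*(p1-p2)) <= 64*(M*M)*(4*(eps*eps) + 32*s*eps) /\
  s*s*((q1-q2)*(q1-q2)) <= 64*(M*M)*(4*(eps*eps) + 32*s*eps) /\
  s*s*((r1-r2)*(r1-r2)) <= 64*(M*M)*(4*(eps*eps) + 32*s*eps).
Proof.
  intros Hc HM Hs F1 F2 Hd1 Hd2 He0 He1.
  pose proof (Hs _ _ _ F1) as Hs1. pose proof (Hs _ _ _ F2) as Hs2.
  pose proof (Hs _ _ _ (feas_mid K _ _ _ _ _ _ Hc F1 F2)) as Hmid.
  destruct (feas_bound K M _ _ _ HM F1) as [B1 [B1' HM0]].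
  destruct (feas_bound K M _ _ _ HM F2) as [B2 [B2' _]].
  destruct F1 as [Hp1 [Hq1 _]]. destruct F2 as [Hp2 [Hq2 _]].
  pose proof (mixed_nonneg _ _ _ _ _ _ Hp1 Hq1 Hp2 Hq2) as Hmix.
  set (d1 := p1*r1 - q1*q1) in *. set (d2 := p2*r2 - q2*q2) in *.
  set (a := p1+p2). set (b := q1+q2). set (c := r1+r2).
  set (al := p1-p2). set (be := q1-q2). set (ga := r1-r2).
  set (dl := a*c - b*b).
  set (m := a*ga + c*al - 2*b*be). set (dD := al*ga - be*be).
  assert (Hdl4 : dl <= 4*s).
  { replace dl with (4*((p1 + p2) / 2 * ((r1 + r2) / 2) - (q1 + q2) / 2 * ((q1 + q2) / 2)))
      by (unfold dl, a, b, c; field). lra. }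
  assert (Ed1 : 4*d1 = dl + m + dD) by (unfold d1, dl, m, dD, a, b, c, al, be, ga; ring).
  assert (Ed2 : 4*d2 = dl - m + dD) by (unfold d2, dl, m, dD, a, b, c, al, be, ga; ring).
  assert (Edl : dl = d1 + d2 + (p1*r2 + p2*r1 - 2*q1*q2)) by (unfold d1, d2, dl, a, b, c; ring).
  assert (Hs0 : 0 < s) by lra.
  assert (Hdls : s <= dl) by lra.
  set (W := m*m - 2*dl*dD).
  assert (HW : W <= 4*(eps*eps) + 32*s*eps).
  { assert (Hm : m = 2*(d1-d2)) by lra.
    assert (HdD : -4*eps <= dD) by lra.
    assert (m*m <= 4*(eps*eps)) by (rewrite Hm; nra).
    assert (-2*dl*dD <= 32*s*eps) by nra.
    unfold W; lra. }
  assert (Ha : 0 < a) by (unfold a; lra).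
  assert (Hdlp : 0 < dl) by lra.
  assert (Ba : a*a <= 4*(M*M)) by (unfold a; nra).
  assert (Bb : b*b <= 4*(M*M)) by (unfold b; nra).
  assert (Bc : c*c <= 4*(M*M)) by (unfold c; nra).
  assert (Bx : (a+2*b+c)*(a+2*b+c) <= 72*(M*M)).
  { assert ((a+2*b+c)*(a+2*b+c) <= 6*(a*a+b*b+c*c)).
    { assert (0 <= (a-c)*(a-c)) by apply Rle_0_sqr.
      assert (0 <= (2*a-b)*(2*a-b)) by apply Rle_0_sqr. assert (0 <= (2*c-b)*(2*c-b)) by apply Rle_0_sqr.
      assert (6*(a*a+b*b+c*c) - (a+2*b+c)*(a+2*b+c) = (a-c)*(a-c) + (2*a-b)*(2*a-b) + (2*c-b)*(2*c-b)) by ring.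
      lra. }
    lra. }
  pose proof (key_e1 a b c al be ga Ha Hdlp) as K1.
  assert (0 < r1) by (unfold d1 in Hq1; assert (0 <= q1*q1) by apply Rle_0_sqr; nra).
  assert (0 < r2) by (unfold d2 in Hq2; assert (0 <= q2*q2) by apply Rle_0_sqr; nra).
  assert (Hc0 : 0 < c) by (unfold c; lra).
  pose proof (key_e1 c b a ga be al Hc0 ltac:(replace (c*a-b*b) with dl by (unfold dl; ring); lra)) as K2.
  assert (Hx0 : 0 < a+2*b+c).
  { assert (a*(a+2*b+c) > 0); [|nra].
    assert (a*(a+2*b+c) = (a+b)*(a+b) + dl) by (unfold dl; ring).
    assert (0 <= (a+b)*(a+b)) by apply Rle_0_sqr. lra. }
  pose proof (key_e1 (a+2*b+c) (b+c) c (al+2*be+ga) (be+ga) ga Hx0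
     ltac:(replace ((a+2*b+c)*c - (b+c)*(b+c)) with dl by (unfold dl; ring); lra)) as K3.
  replace ((a+2*b+c)*c - (b+c)*(b+c)) with dl in K3 by (unfold dl; ring).
  replace (((a + 2 * b + c) * ga + c * (al + 2 * be + ga) - 2 * (b + c) * (be + ga)) ^ 2 -
        2 * dl * ((al + 2 * be + ga) * ga - (be + ga) * (be + ga))) with W in K3
    by (unfold W, m, dD; ring).
  replace ((a * ga + c * al - 2 * b * be) ^ 2 - 2 * (a * c - b * b) * (al * ga - be * be)) with W in K1
    by (unfold W, m, dD, dl; ring).
  replace ((c * al + a * ga - 2 * b * be) ^ 2 - 2 * (c * a - b * b) * (ga * al - be * be)) with W in K2
    by (unfold W, m, dD, dl; ring).
  fold dl in K1. replace (c*a - b*b) with dl in K2 by (unfold dl; ring).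
  assert (HW0 : 0 <= W).
  { assert (0 <= dl^2 * al^2) by (apply Rmult_le_pos; apply pow2_ge_0).
    assert (0 < a^2) by (apply pow_lt; lra).
    destruct (Rle_dec 0 W); auto. exfalso. assert (a^2 * W < 0) by (apply Rmult_pos_neg; lra). lra. }
  assert (Hss : s*s <= dl^2) by (simpl; nra).
  assert (G : forall z t, 0 <= t -> dl^2 * z^2 <= t * W -> s*s*(z*z) <= t*W).
  { intros z t Ht Hzt. assert (s*s*(z*z) <= dl^2 * z^2).
    { replace (z^2) with (z*z) by ring. apply Rmult_le_compat_r; [apply Rle_0_sqr|lra]. }
    lra. }
  assert (Wb : 64*(M*M)*W <= 64*(M*M)*(4*(eps*eps) + 32*s*eps))
    by (apply Rmult_le_compat_l; [nra|lra]).
  assert (Ga : s*s*(al*al) <= 4*(M*M)*W).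
  { apply G. nra. assert (a^2*W <= 4*(M*M)*W) by (apply Rmult_le_compat_r; [lra|simpl; lra]). lra. }
  assert (Gc : s*s*(ga*ga) <= 4*(M*M)*W).
  { apply G. nra. assert (c^2*W <= 4*(M*M)*W) by (apply Rmult_le_compat_r; [lra|simpl; lra]). lra. }
  assert (Gx : s*s*((al+2*be+ga)*(al+2*be+ga)) <= 72*(M*M)*W).
  { apply G. nra. assert ((a+2*b+c)^2*W <= 72*(M*M)*W) by (apply Rmult_le_compat_r; [lra|simpl; lra]). lra. }
  assert (Gb : s*s*(be*be) <= 60*(M*M)*W).
  { assert (4*(be*be) <= 3*((al+2*be+ga)*(al+2*be+ga) + al*al + ga*ga)).
    { assert (0 <= (al+2*be+ga + al)*(al+2*be+ga+al)) by apply Rle_0_sqr.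
      assert (0 <= (al - ga)*(al-ga)) by apply Rle_0_sqr.
      assert (0 <= (al+2*be+ga + ga)*(al+2*be+ga+ga)) by apply Rle_0_sqr.
      assert (3*((al+2*be+ga)*(al+2*be+ga) + al*al + ga*ga) - 4*(be*be) =
        (al+2*be+ga + al)*(al+2*be+ga+al) + (al - ga)*(al-ga) + (al+2*be+ga + ga)*(al+2*be+ga+ga)) by ring.
      lra. }
    assert (0 <= s*s) by apply Rle_0_sqr.
    assert (s*s*(4*(be*be)) <= s*s*(3*((al+2*be+ga)*(al+2*be+ga) + al*al + ga*ga)))
      by (apply Rmult_le_compat_l; lra).
    lra. }
  assert (0 <= M*M*W) by (apply Rmult_le_pos; [apply Rle_0_sqr|lra]).
  split; [|split]; lra.
Qed.


Lemma small_inv eta : 0 < eta -> exists N, forall n, (n >= N)%nat -> / (INR n + 1) < eta.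
Proof.
  intros He. destruct (archimed_cor1 eta He) as [N [HN HN0]]. exists N. intros n Hn.
  apply le_INR in Hn. assert (0 < INR N) by (apply lt_0_INR; auto).
  eapply Rlt_trans; [|apply HN]. apply Rinv_lt_contravar; nra.
Qed.

Lemma inv_pos n : 0 < / (INR n + 1).
Proof. apply Rinv_0_lt_compat. pose proof (pos_INR n); lra. Qed.

Lemma inv_mono n N : (n >= N)%nat -> / (INR n + 1) <= / (INR N + 1).
Proof.
  intro H. apply le_INR in H. pose proof (pos_INR N).
  apply Rinv_le_contravar; lra.
Qed.

Lemma cv_ge u l c : Un_cv u l -> (forall n, c <= u n) -> c <= l.
Proof.
  intros Hu Hc. destruct (Rle_dec c l) as [|Hn]; auto. exfalso.
  destruct (Hu (c - l)) as [N HN]; [lra|]. specialize (HN N (Nat.le_refl N)).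
  specialize (Hc N). unfold Rdist in HN. apply Rabs_def2 in HN. lra.
Qed.

Lemma cv_ge_s u l s : Un_cv u l -> (forall n, s - / (INR n + 1) < u n) -> s <= l.
Proof.
  intros Hu Hc. destruct (Rle_dec s l) as [|Hn]; auto. exfalso.
  destruct (Hu ((s - l)/2)) as [N1 HN1]; [lra|].
  destruct (small_inv ((s - l)/2)) as [N2 HN2]; [lra|].
  specialize (HN1 (max N1 N2) (Nat.le_max_l _ _)). specialize (HN2 (max N1 N2) (Nat.le_max_r _ _)).
  specialize (Hc (max N1 N2)). unfold Rdist in HN1. apply Rabs_def2 in HN1. lra.
Qed.

Lemma exists_max K : is_closed K -> is_bounded K -> is_convex K -> nonempty_interior K ->
  centrally_symmetric K ->
  exists p q r, feas K p q r /\ forall p' q' r', feas K p' q' r' -> p'*r' - q'*q' <= p*r - q*q.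
Proof.
  intros Hcl [M HM] Hc Hi Hs.
  destruct (zero_interior K Hc Hi Hs) as [r0 [Hr0 H0]].
  set (E := fun d => exists p q r, feas K p q r /\ d = p*r - q*q).
  assert (HF0 : feas K (r0/2) 0 (r0/2)).
  { split; [lra|split; [nra|]]. intros v1 v2 Hv. apply H0. apply pnorm_lt; auto.
    assert (0 < r0*r0) by nra.
    replace ((r0 / 2 * v1 + 0 * v2) * (r0 / 2 * v1 + 0 * v2) + (0 * v1 + r0 / 2 * v2) * (0 * v1 + r0 / 2 * v2))
      with (r0*r0/4 * (v1*v1+v2*v2)) by field. nra. }
  assert (HEb : bound E).
  { exists (M*M). intros d [p [q [r [Hf ->]]]].
    destruct (feas_bound K M p q r HM Hf) as [B1 [B2 HM0]].
    destruct Hf as [Hp [Hd _]]. assert (0 <= q*q) by apply Rle_0_sqr.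
    assert (p <= M) by nra. assert (r <= M) by nra. assert (0 < r) by nra. nra. }
  destruct (completeness E HEb (ex_intro _ _ (ex_intro _ _ (ex_intro _ _ (ex_intro _ _ (conj HF0 eq_refl))))))
    as [s [Hub Hlub]].
  assert (Hsb : forall p q r, feas K p q r -> p*r - q*q <= s).
  { intros p q r Hf. apply Hub. exists p, q, r. auto. }
  assert (Hs0 : 0 < s) by (pose proof (Hsb _ _ _ HF0); nra).
  assert (Hseq : forall n : nat, exists t : R * (R * R),
     feas K (fst t) (fst (snd t)) (snd (snd t)) /\
     s - / (INR n + 1) < fst t * snd (snd t) - fst (snd t) * fst (snd t)).
  { intro n. apply Classical_Prop.NNPP. intro Hn.
    assert (s <= s - / (INR n + 1)).
    { apply Hlub. intros d [p [q [r [Hf ->]]]].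
      destruct (Rle_dec (p*r - q*q) (s - / (INR n + 1))) as [|Hgt]; auto. exfalso.
      apply Hn. exists (p, (q, r)). simpl. split; auto. lra. }
    pose proof (inv_pos n). lra. }
  set (f := fun n => proj1_sig (constructive_indefinite_description _ (Hseq n))).
  assert (Hf : forall n, feas K (fst (f n)) (fst (snd (f n))) (snd (snd (f n))) /\
     s - / (INR n + 1) < fst (f n) * snd (snd (f n)) - fst (snd (f n)) * fst (snd (f n)))
    by (intro n; unfold f; apply (proj2_sig (constructive_indefinite_description _ (Hseq n)))).
  set (P := fun n => fst (f n)). set (Q := fun n => fst (snd (f n))). set (Rr := fun n => snd (snd (f n))).
  assert (HF : forall n, feas K (P n) (Q n) (Rr n)) by (intro n; apply Hf).
  assert (HD : forall n, s - / (INR n + 1) < P n * Rr n - Q n * Q n) by (intro n; apply Hf).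
  assert (HM0 : 0 <= M) by (destruct (feas_bound K M _ _ _ HM HF0) as [_ [_ ?]]; auto).
  assert (Hcau : forall e, 0 < e -> exists N, forall n m, (n >= N)%nat -> (m >= N)%nat ->
     Rabs (P n - P m) < e /\ Rabs (Q n - Q m) < e /\ Rabs (Rr n - Rr m) < e).
  { intros e He.
    set (C := 64*(M*M)*(4 + 32*s) + 1).
    assert (HC : 0 < C) by (unfold C; assert (0 <= M*M) by apply Rle_0_sqr; nra).
    set (eta := Rmin (s/2) (Rmin 1 (s*s*(e*e)/C))).
    assert (Heta : 0 < eta).
    { unfold eta. apply Rmin_pos; [lra|apply Rmin_pos; [lra|]].
      apply Rdiv_lt_0_compat; auto. assert (0 < s*s) by nra. assert (0 < e*e) by nra. nra. }
    destruct (small_inv eta Heta) as [N HN]. exists N. intros n m Hn Hm.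
    set (ep := / (INR N + 1)).
    assert (Hep : ep < eta) by (apply HN; auto).
    assert (Hep0 : 0 < ep) by apply inv_pos.
    assert (Hep1 : ep <= s/2) by (unfold eta in Hep; pose proof (Rmin_l (s/2) (Rmin 1 (s*s*(e*e)/C))); lra).
    assert (Hep2 : ep <= 1) by (unfold eta in Hep; pose proof (Rmin_r (s/2) (Rmin 1 (s*s*(e*e)/C))); pose proof (Rmin_l 1 (s*s*(e*e)/C)); lra).
    assert (Hep3 : ep < s*s*(e*e)/C) by (unfold eta in Hep; pose proof (Rmin_r (s/2) (Rmin 1 (s*s*(e*e)/C))); pose proof (Rmin_r 1 (s*s*(e*e)/C)); lra).
    assert (Hdn : s - ep <= P n * Rr n - Q n * Q n) by (pose proof (HD n); pose proof (inv_mono n N Hn); unfold ep; lra).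
    assert (Hdm : s - ep <= P m * Rr m - Q m * Q m) by (pose proof (HD m); pose proof (inv_mono m N Hm); unfold ep; lra).
    destruct (KI K M s _ _ _ _ _ _ ep Hc HM Hsb (HF n) (HF m) Hdn Hdm ltac:(lra) Hep1) as [K1 [K2 K3]].
    assert (Hb : 64*(M*M)*(4*(ep*ep) + 32*s*ep) < s*s*(e*e)).
    { assert (0 <= M*M) by apply Rle_0_sqr.
      assert (64*(M*M)*(4*(ep*ep) + 32*s*ep) <= C * ep).
      { unfold C. assert (4*(ep*ep) <= 4*ep) by nra.
        assert (64*(M*M)*(4*(ep*ep) + 32*s*ep) <= 64*(M*M)*((4+32*s)*ep)) by (apply Rmult_le_compat_l; nra).
        nra. }
      assert (C*ep < s*s*(e*e)).
      { apply (Rmult_lt_compat_l C) in Hep3; auto. field_simplify in Hep3; lra. }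
      lra. }
    assert (Habs : forall x, s*s*(x*x) < s*s*(e*e) -> Rabs x < e).
    { intros x Hx. assert (0 < s*s) by nra. assert (x*x < e*e) by (apply (Rmult_lt_reg_l (s*s)); auto).
      apply Rabs_def1; nra. }
    repeat split; apply Habs; lra. }
  assert (CP : Cauchy_crit P).
  { intros e He. destruct (Hcau e He) as [N HN]. exists N. intros n m Hn Hm. unfold Rdist. apply (HN n m Hn Hm). }
  assert (CQ : Cauchy_crit Q).
  { intros e He. destruct (Hcau e He) as [N HN]. exists N. intros n m Hn Hm. unfold Rdist. apply (HN n m Hn Hm). }
  assert (CR : Cauchy_crit Rr).
  { intros e He. destruct (Hcau e He) as [N HN]. exists N. intros n m Hn Hm. unfold Rdist. apply (HN n m Hn Hm). }
  destruct (R_complete P CP) as [lp Hlp].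
  destruct (R_complete Q CQ) as [lq Hlq].
  destruct (R_complete Rr CR) as [lr Hlr].
  pose proof (CV_minus _ _ _ _ (CV_mult _ _ _ _ Hlp Hlr) (CV_mult _ _ _ _ Hlq Hlq)) as Hdet.
  assert (Hds : s <= lp*lr - lq*lq) by (apply (cv_ge_s _ _ s Hdet); intro n; apply HD).
  assert (Hlp0 : 0 <= lp) by (apply (cv_ge P lp 0 Hlp); intro n; destruct (HF n); lra).
  assert (Hfl : feas K lp lq lr).
  { assert (0 <= lq*lq) by apply Rle_0_sqr.
    assert (lp <> 0) by (intro; subst; nra).
    split; [lra|split; [lra|]]. intros v1 v2 Hv. apply Hcl. intros e He.
    destruct (Hlp (e/4)) as [N1 HN1]; [lra|].
    destruct (Hlq (e/4)) as [N2 HN2]; [lra|].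
    destruct (Hlr (e/4)) as [N3 HN3]; [lra|].
    set (n := max N1 (max N2 N3)).
    specialize (HN1 n ltac:(unfold n; lia)). specialize (HN2 n ltac:(unfold n; lia)).
    specialize (HN3 n ltac:(unfold n; lia)). unfold Rdist in HN1, HN2, HN3.
    destruct (HF n) as [_ [_ HKn]].
    exists (P n * v1 + Q n * v2, Q n * v1 + Rr n * v2). split; [apply HKn; auto|].
    unfold pdist, psub; simpl. eapply Rle_lt_trans; [apply pnorm_bound|].
    assert (Hv1 : Rabs v1 <= 1) by (apply Rabs_le; nra).
    assert (Hv2 : Rabs v2 <= 1) by (apply Rabs_le; nra).
    replace (P n * v1 + Q n * v2 - (lp * v1 + lq * v2)) with ((P n - lp) * v1 + (Q n - lq) * v2) by ring.
    replace (Q n * v1 + Rr n * v2 - (lq * v1 + lr * v2)) with ((Q n - lq) * v1 + (Rr n - lr) * v2) by ring.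
    assert (Ht : forall x y z w, Rabs z <= 1 -> Rabs w <= 1 -> Rabs (x*z + y*w) <= Rabs x + Rabs y).
    { intros x y z w Hz Hw. eapply Rle_trans; [apply Rabs_triang|]. rewrite !Rabs_mult.
      pose proof (Rabs_pos x); pose proof (Rabs_pos y). nra. }
    pose proof (Ht (P n - lp) (Q n - lq) v1 v2 Hv1 Hv2).
    pose proof (Ht (Q n - lq) (Rr n - lr) v1 v2 Hv1 Hv2). lra. }
  exists lp, lq, lr. split; auto. intros p' q' r' Hf'. pose proof (Hsb _ _ _ Hf'). lra.
Qed.


Definition Qp p q r (w : pt) := (r * fst w - q * snd w)^2 + (- q * fst w + p * snd w)^2.

Lemma uniq K M p1 q1 r1 p2 q2 r2 : is_convex K -> (forall z, K z -> pnorm z <= M) ->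
  (forall p q r, feas K p q r -> p*r - q*q <= p1*r1 - q1*q1) ->
  feas K p1 q1 r1 -> feas K p2 q2 r2 -> p2*r2 - q2*q2 = p1*r1 - q1*q1 ->
  p2 = p1 /\ q2 = q1 /\ r2 = r1.
Proof.
  intros Hc HM Hmax F1 F2 Hd.
  assert (Hs : 0 < p1*r1 - q1*q1) by (destruct F1 as [_ [? _]]; auto).
  destruct (KI K M (p1*r1 - q1*q1) _ _ _ _ _ _ 0 Hc HM Hmax F1 F2 ltac:(lra) ltac:(lra) ltac:(lra) ltac:(lra))
    as [K1 [K2 K3]].
  set (s := p1*r1 - q1*q1) in *.
  assert (0 < s*s) by nra.
  assert (Z : forall x, s*s*(x*x) <= 64*(M*M)*(4*(0*0)+32*s*0) -> x = 0).
  { intros x Hx. replace (64*(M*M)*(4*(0*0)+32*s*0)) with 0 in Hx by ring.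
    assert (0 <= x*x) by apply Rle_0_sqr. assert (x*x = 0) by nra. nra. }
  apply Z in K1; apply Z in K2; apply Z in K3. lra.
Qed.

Lemma inv_Q K M p q r t11 t12 t21 t22 : is_convex K -> (forall z, K z -> pnorm z <= M) ->
  feas K p q r -> (forall p' q' r', feas K p' q' r' -> p'*r' - q'*q' <= p*r - q*q) ->
  t11*t22 - t12*t21 = -1 -> (forall z, K z -> K (lin_app t11 t12 t21 t22 z)) ->
  forall w, Qp p q r (lin_app t11 t12 t21 t22 w) = Qp p q r w.
Proof.
  intros Hc HM Hf Hmax HdT HT w.
  pose proof Hf as [Hp [Hdl HKP]].
  set (dl := p*r - q*q) in *.
  set (e := t11*p + t12*q). set (f := t11*q + t12*r). set (g := t21*p + t22*q). set (h := t21*q + t22*r).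
  assert (Hdet : e*h - f*g = - dl) by (unfold e, f, g, h, dl; transitivity ((t11*t22 - t12*t21)*(p*r-q*q)); [ring|rewrite HdT; ring]).
  set (al := e - h). set (be := - f - g).
  assert (Hab : 0 < al*al + be*be).
  { destruct (Req_dec al 0) as [Ha|Ha]; destruct (Req_dec be 0) as [Hb|Hb]; try nra.
    exfalso. assert (h = e) by (unfold al in Ha; lra). assert (g = - f) by (unfold be in Hb; lra).
    rewrite H, H0 in Hdet. nra. }
  set (N := sqrt (al*al + be*be)).
  assert (HN : 0 < N) by (apply sqrt_lt_R0; auto).
  assert (HN2 : N * N = al*al+be*be) by (apply sqrt_sqrt; lra).
  set (c := al / N). set (sn := be / N).
  assert (Hcs : c*c + sn*sn = 1) by (unfold c, sn; replace (al/N*(al/N) + be/N*(be/N)) with ((al*al+be*be)/(N*N)) by (field; lra); rewrite <- HN2; field; lra).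
  set (S11 := e*c - f*sn). set (S12 := -e*sn - f*c). set (S21 := g*c - h*sn). set (S22 := -g*sn - h*c).
  assert (HS : S12 = S21).
  { apply Rminus_diag_uniq. replace (S12 - S21) with (-(sn*al) + c*be) by (unfold S12, S21, al, be; ring).
    unfold c, sn. field. lra. }
  assert (Htr : S11 + S22 = N).
  { transitivity (c*al + sn*be). unfold S11, S22, al, be; ring.
    unfold c, sn. replace (al/N*al + be/N*be) with ((al*al+be*be)/N) by (field; lra). rewrite <- HN2. field. lra. }
  assert (HdS : S11*S22 - S12*S12 = dl).
  { rewrite HS at 2. transitivity ((e*h - f*g)*(-(c*c+sn*sn))). unfold S11, S12, S21, S22; ring.
    rewrite Hcs, Hdet. ring. }
  assert (HS11 : 0 < S11).
  { destruct (Rle_dec S11 0); auto; [|lra]. assert (0 <= S12*S12) by apply Rle_0_sqr. nra. }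
  assert (FS : feas K S11 S12 S22).
  { split; auto. split; [lra|]. intros v1 v2 Hv.
    set (w1 := c*v1 - sn*v2). set (w2 := - sn*v1 - c*v2).
    assert (Hw : w1*w1 + w2*w2 <= 1).
    { replace (w1*w1+w2*w2) with ((c*c+sn*sn)*(v1*v1+v2*v2)) by (unfold w1, w2; ring). rewrite Hcs; lra. }
    pose proof (HT _ (HKP w1 w2 Hw)) as HH.
    match type of HH with K ?z => replace (_, _) with z; auto end.
    unfold lin_app; simpl. f_equal.
    - unfold S11, S12, w1, w2, e, f; ring.
    - rewrite HS. unfold S21, S22, w1, w2, g, h; ring. }
  destruct (uniq K M p q r S11 S12 S22 Hc HM Hmax Hf FS ltac:(unfold dl in HdS; lra)) as [E1 [E2 E3]].
  assert (Ee : e = p*c - q*sn).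
  { rewrite <- E1, <- E2. transitivity (e*(c*c+sn*sn)). rewrite Hcs; ring. unfold S11, S12; ring. }
  assert (Ef : f = - p*sn - q*c).
  { rewrite <- E1, <- E2. transitivity (f*(c*c+sn*sn)). rewrite Hcs; ring. unfold S11, S12; ring. }
  assert (Eg : g = q*c - r*sn).
  { rewrite <- E2, <- E3, HS. transitivity (g*(c*c+sn*sn)). rewrite Hcs; ring. unfold S21, S22; ring. }
  assert (Eh : h = - q*sn - r*c).
  { rewrite <- E2, <- E3, HS. transitivity (h*(c*c+sn*sn)). rewrite Hcs; ring. unfold S21, S22; ring. }
  assert (Hdl0 : dl <> 0) by lra.
  assert (T11 : t11 * dl = e*r - f*q) by (unfold e, f, dl; ring).
  assert (T12 : t12 * dl = f*p - e*q) by (unfold e, f, dl; ring).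
  assert (T21 : t21 * dl = g*r - h*q) by (unfold g, h, dl; ring).
  assert (T22 : t22 * dl = h*p - g*q) by (unfold g, h, dl; ring).
  rewrite Ee, Ef in T11, T12. rewrite Eg, Eh in T21, T22.
  assert (A1 : r*t11 - q*t21 = c*r + sn*q).
  { apply (Rmult_eq_reg_r dl); auto. transitivity (r*(t11*dl) - q*(t21*dl)); [ring|].
    rewrite T11, T21. unfold dl; ring. }
  assert (A2 : r*t12 - q*t22 = - c*q - sn*p).
  { apply (Rmult_eq_reg_r dl); auto. transitivity (r*(t12*dl) - q*(t22*dl)); [ring|].
    rewrite T12, T22. unfold dl; ring. }
  assert (A3 : -q*t11 + p*t21 = - sn*r + c*q).
  { apply (Rmult_eq_reg_r dl); auto. transitivity (-q*(t11*dl) + p*(t21*dl)); [ring|].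
    rewrite T11, T21. unfold dl; ring. }
  assert (A4 : -q*t12 + p*t22 = sn*q - c*p).
  { apply (Rmult_eq_reg_r dl); auto. transitivity (-q*(t12*dl) + p*(t22*dl)); [ring|].
    rewrite T12, T22. unfold dl; ring. }
  destruct w as [w1 w2]. unfold Qp, lin_app; cbn [fst snd].
  transitivity (((r*t11 - q*t21)*w1 + (r*t12 - q*t22)*w2)^2 + ((-q*t11 + p*t21)*w1 + (-q*t12+p*t22)*w2)^2).
  ring. rewrite A1, A2, A3, A4.
  transitivity ((c*c+sn*sn)*((r*w1 - q*w2)^2 + (-q*w1 + p*w2)^2)). ring. rewrite Hcs; ring.
Qed.


Lemma Qp_pos p q r w : 0 < p*r - q*q -> w <> (0,0) -> 0 < Qp p q r w.
Proof.
  intros Hd Hw. destruct w as [w1 w2]. unfold Qp; cbn [fst snd].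
  set (X := r*w1 - q*w2). set (Y := -q*w1 + p*w2).
  assert (0 <= X^2) by apply pow2_ge_0. assert (0 <= Y^2) by apply pow2_ge_0.
  destruct (Req_dec X 0) as [HX|HX]; [destruct (Req_dec Y 0) as [HY|HY]|].
  - exfalso. apply Hw.
    assert (E1 : (p*r - q*q)*w1 = p*X + q*Y) by (unfold X, Y; ring).
    assert (E2 : (p*r - q*q)*w2 = q*X + r*Y) by (unfold X, Y; ring).
    rewrite HX, HY in E1, E2.
    assert (w1 = 0) by (apply (Rmult_eq_reg_l (p*r-q*q)); lra).
    assert (w2 = 0) by (apply (Rmult_eq_reg_l (p*r-q*q)); lra). subst; auto.
  - assert (0 < Y^2) by (replace (Y^2) with (Y*Y) by ring; apply Rsqr_pos_lt; auto). lra.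
  - assert (0 < X^2) by (replace (X^2) with (X*X) by ring; apply Rsqr_pos_lt; auto). lra.
Qed.

Lemma Qp_scal p q r l w : Qp p q r (pscal l w) = l*l * Qp p q r w.
Proof. destruct w; unfold Qp, pscal; cbn [fst snd]; ring. Qed.

Lemma Qp_opp p q r w : Qp p q r (popp w) = Qp p q r w.
Proof. destruct w; unfold Qp, popp; cbn [fst snd]; ring. Qed.

Lemma reverse K (Hcomp : is_compact K) (Hconv : is_convex K)
  (Hint : nonempty_interior K) (Hsym : centrally_symmetric K) :
  (forall x y : pt, boundary_pt K x -> boundary_pt K y ->
     x <> y -> x <> popp y ->
     forall a b c d : R,
       lin_app a b c d (padd x y) = popp (padd x y) ->
       lin_app a b c d (psub y x) = psub y x ->
       forall p, K p -> K (lin_app a b c d p)) -> is_ellipse K.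
Proof.
  intros Hrev. destruct Hcomp as [Hcl Hbd]. pose proof Hbd as [M HM].
  destruct (exists_max K Hcl Hbd Hconv Hint Hsym) as [p [q [r [Hf Hmax]]]].
  pose proof Hf as [Hp [Hdl _]].
  destruct (exists_bd K (1,0) Hcl Hbd Hconv Hint Hsym) as [t0 [Ht0 Hx0]].
  { intro E; injection E; lra. }
  set (x0 := pscal t0 (1,0)) in *.
  set (c0 := Qp p q r x0).
  assert (Hr : 0 < r) by (assert (0 <= q*q) by apply Rle_0_sqr; nra).
  assert (Hc0 : 0 < c0).
  { unfold c0. apply Qp_pos; auto. unfold x0, pscal; simpl. intro E; injection E; intros; nra. }
  pose proof (bd_of_boundary K x0 Hcl Hconv Hint Hsym Hx0) as Bx0.
  assert (HQ : forall y, boundary_pt K y -> Qp p q r y = c0).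
  { intros y Hy. pose proof (bd_of_boundary K y Hcl Hconv Hint Hsym Hy) as By.
    destruct (Classical_Prop.classic (y = x0)) as [->|Hne1]; [reflexivity|].
    destruct (Classical_Prop.classic (y = popp x0)) as [->|Hne2]; [apply Qp_opp|].
    destruct x0 as [x1 x2] eqn:Ex0. destruct y as [y1 y2].
    assert (HD : x1*y2 - x2*y1 <> 0).
    { intro HD0. pose proof (Bd_nonzero K _ Bx0) as Hnz.
      assert (Hn : 0 < x1*x1 + x2*x2).
      { destruct (Req_dec x1 0); destruct (Req_dec x2 0); try nra. subst. exfalso; auto. }
      set (t := (x1*y1 + x2*y2) / (x1*x1+x2*x2)).
      assert (Ey : (y1, y2) = pscal t (x1, x2)).
      { unfold pscal; simpl. f_equal.
        - assert (y1*(x1*x1+x2*x2) = (x1*y1+x2*y2)*x1).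
          { apply Rminus_diag_uniq; replace (y1*(x1*x1+x2*x2) - (x1*y1+x2*y2)*x1) with (-x2*(x1*y2-x2*y1)) by ring; rewrite HD0; ring. }
          unfold t. field_simplify_eq; lra.
        - assert (y2*(x1*x1+x2*x2) = (x1*y1+x2*y2)*x2).
          { apply Rminus_diag_uniq; replace (y2*(x1*x1+x2*x2) - (x1*y1+x2*y2)*x2) with (x1*(x1*y2-x2*y1)) by ring; rewrite HD0; ring. }
          unfold t. field_simplify_eq; lra. }
      destruct (Rtotal_order t 0) as [Hneg|[Hz|Hpos]].
      - assert (Bo : Bd K (pscal (-t) (x1,x2))).
        { replace (pscal (-t) (x1,x2)) with (popp (y1,y2)) by (rewrite Ey; unfold popp, pscal; simpl; f_equal; ring).
          apply Bd_sym; auto. }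
        pose proof (Bd_ray K _ _ Hconv Hint Hsym Bx0 Bo ltac:(lra)).
        apply Hne2. rewrite Ey. unfold popp, pscal; simpl. f_equal; nra.
      - apply (Bd_nonzero K _ By). rewrite Ey, Hz. unfold pscal; simpl. f_equal; ring.
      - rewrite Ey in By. pose proof (Bd_ray K _ _ Hconv Hint Hsym Bx0 By Hpos).
        apply Hne1. rewrite Ey. unfold pscal; simpl. f_equal; nra. }
    set (u1 := x1 + y1). set (u2 := x2 + y2). set (v1 := y1 - x1). set (v2 := y2 - x2).
    set (D := u1*v2 - u2*v1).
    assert (HDn : D <> 0) by (unfold D, u1, u2, v1, v2; intro; apply HD; nra).
    set (a := (-v2*u1 - u2*v1)/D). set (b := 2*u1*v1/D). set (c := -2*u2*v2/D). set (d := (v1*u2 + u1*v2)/D).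
    assert (E1 : lin_app a b c d (padd (x1,x2) (y1,y2)) = popp (padd (x1,x2) (y1,y2))).
    { unfold lin_app, padd, popp; simpl. fold u1 u2. unfold a, b, c, d, D. f_equal; field; auto. }
    assert (E2 : lin_app a b c d (psub (y1,y2) (x1,x2)) = psub (y1,y2) (x1,x2)).
    { unfold lin_app, psub; simpl. fold v1 v2. unfold a, b, c, d, D. f_equal; field; auto. }
    rewrite <- Ex0 in Hx0.
    assert (Hne3 : (x1,x2) <> popp (y1,y2)).
    { intro E. apply Hne2. rewrite E. unfold popp; simpl. f_equal; ring. }
    pose proof (Hrev (x1,x2) (y1,y2) ltac:(rewrite <- Ex0; auto) Hy (fun E => Hne1 (eq_sym E)) Hne3 a b c d E1 E2) as HT.
    assert (HdT : a*d - b*c = -1) by (unfold a, b, c, d, D; field; auto).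
    pose proof (inv_Q K M p q r a b c d Hconv HM Hf Hmax HdT HT (x1,x2)) as Hinv.
    assert (Tx : lin_app a b c d (x1,x2) = popp (y1,y2)).
    { unfold lin_app, popp; simpl. unfold a, b, c, d, D, u1, u2, v1, v2. f_equal; field; fold u1 u2 v1 v2 D; auto. }
    rewrite Tx, Qp_opp in Hinv. rewrite Hinv. unfold c0. reflexivity. }
  assert (Hchar : forall w, K w <-> Qp p q r w <= c0).
  { intro w. destruct (Classical_Prop.classic (w = (0,0))) as [->|Hw].
    - split; intro; [unfold Qp; simpl; lra|apply K0; auto].
    - destruct (exists_bd K w Hcl Hbd Hconv Hint Hsym Hw) as [tau [Htau Hb]].
      pose proof (HQ _ Hb) as Hq. rewrite Qp_scal in Hq.
      pose proof (bd_of_boundary K _ Hcl Hconv Hint Hsym Hb) as [Kb Hnot].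
      pose proof (Qp_pos p q r w Hdl Hw) as Hqp.
      split; intro H.
      + destruct (Rlt_dec tau 1) as [Hlt|Hge].
        * exfalso. apply (Hnot (/ tau)).
          -- rewrite <- Rinv_1. apply Rinv_lt_contravar; lra.
          -- replace (pscal (/ tau) (pscal tau w)) with w; auto.
             destruct w; unfold pscal; simpl; f_equal; field; lra.
        * assert (1 <= tau*tau) by nra.
          assert (Qp p q r w <= tau*tau*Qp p q r w) by
            (rewrite <- (Rmult_1_l (Qp p q r w)) at 1; apply Rmult_le_compat_r; lra). lra.
      + assert (Ht1 : 1 <= tau).
        { destruct (Rlt_dec tau 1) as [Hlt|]; [|lra]. exfalso.
          assert (tau*tau < 1) by nra.
          assert (tau*tau*Qp p q r w < Qp p q r w) by
            (rewrite <- (Rmult_1_l (Qp p q r w)) at 2; apply Rmult_lt_compat_r; lra). lra. }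
        replace w with (pscal (/ tau) (pscal tau w)).
        * apply conv0; auto.
          split; [left; apply Rinv_0_lt_compat; lra|]. rewrite <- Rinv_1. apply Rinv_le_contravar; lra.
        * destruct w; unfold pscal; simpl; f_equal; field; lra. }
  exists ((r*r+q*q)/c0), (-q*(p+r)/c0), ((q*q+p*p)/c0). split; [|split].
  - apply Rdiv_lt_0_compat; auto. nra.
  - replace ((r * r + q * q) / c0 * ((q * q + p * p) / c0) - - q * (p + r) / c0 * (- q * (p + r) / c0))
      with ((p*r-q*q)*(p*r-q*q)/(c0*c0)) by (field; lra).
    apply Rdiv_lt_0_compat; nra.
  - intro w. rewrite Hchar. destruct w as [w1 w2]. unfold Qp; cbn [fst snd].
    replace ((r * r + q * q) / c0 * w1 ^ 2 + 2 * (- q * (p + r) / c0) * w1 * w2 + (q * q + p * p) / c0 * w2 ^ 2)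
      with (((r * w1 - q * w2) ^ 2 + (- q * w1 + p * w2) ^ 2) / c0) by (field; lra).
    split; intro HH.
    + apply (Rmult_le_reg_r c0); auto. field_simplify; lra.
    + assert (HH2 : ((r * w1 - q * w2) ^ 2 + (- q * w1 + p * w2) ^ 2) / c0 * c0 <= 1 * c0)
        by (apply Rmult_le_compat_r; lra).
      field_simplify in HH2; lra.
Qed.


Theorem corollary3p1 (K : pt -> Prop)
  (Hcomp : is_compact K) (Hconv : is_convex K)
  (Hint : nonempty_interior K) (Hsym : centrally_symmetric K) :
  is_ellipse K <->
  (forall x y : pt, boundary_pt K x -> boundary_pt K y ->
     x <> y -> x <> popp y ->
     forall a b c d : R,
       lin_app a b c d (padd x y) = popp (padd x y) ->
       lin_app a b c d (psub y x) = psub y x ->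
       forall p, K p -> K (lin_app a b c d p)).
Proof.
  split.
  - intros [A [B [C [HA [HD HK]]]]]. destruct Hcomp as [Hcl _].
    apply (forward K Hcl Hconv Hint Hsym A B C HA HD). intro p. unfold Qe. apply HK.
  - apply reverse; auto.
Qed.
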